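(* Let $X,Y$ be complex Banach spaces, $\emptyset\ne I\subseteq\mathbb R^n$, let $\mathcal B$ be a non-empty collection of non-empty subsets of $X$ such that every $x\in X$ belongs to some $B\in\mathcal B$, and let $\mathrm R$ be a non-empty collection of sequences in $\mathbb R^n$ such that $\mathbf t+\mathbf b(l)\in I$ whenever $\mathbf t\in I$, $\mathbf b\in\mathrm R$, $l\in\mathbb N$, and such that every subsequence of a sequence in $\mathrm R$ belongs to $\mathrm R$. Let $f:I\to\mathbb C$ be bounded and $\mathrm R$-multi-almost periodic, and let $F:I\times X\to Y$ be $(\mathrm R,\mathcal B)$-multi-almost periodic and bounded on each set $I\times B$, $B\in\mathcal B$. Then $F_1(\mathbf t;x):=f(\mathbf t)F(\mathbf t;x)$, $\mathbf t\in I$, $x\in X$, is $(\mathrm R,\mathcal B)$-multi-almost periodic.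
   Context: A continuous $F:I\times X\to Y$ is $(\mathrm R,\mathcal B)$-multi-almost periodic if for every $B\in\mathcal B$ and every $(\mathbf b_k)\in\mathrm R$ there exist a subsequence $(\mathbf b_{k_l})$ and a function $F^\ast:I\times X\to Y$ with $\lim_{l\to\infty}F(\mathbf t+\mathbf b_{k_l};x)=F^\ast(\mathbf t;x)$ uniformly for $x\in B$, $\mathbf t\in I$. A continuous $f:I\to\mathbb C$ is $\mathrm R$-multi-almost periodic if for every $(\mathbf b_k)\in\mathrm R$ there exist a subsequence $(\mathbf b_{k_l})$ and $f^\ast:I\to\mathbb C$ with $f(\mathbf t+\mathbf b_{k_l})\to f^\ast(\mathbf t)$ uniformly on $I$. *)

(* Defs.v *)
From mathcomp Require Import all_boot all_order all_algebra.
From mathcomp Require Import all_classical all_reals all_analysis.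
From mathcomp Require Export complex.
Import numFieldNormedType.Exports.
Set Implicit Arguments. Unset Strict Implicit. Unset Printing Implicit Defensive.
Import Order.TTheory GRing.Theory Num.Theory.
Local Open Scope ring_scope.
Local Open Scope classical_set_scope.

Definition is_subseq {T : Type} (b c : nat -> T) : Prop :=
  exists phi : nat -> nat, {homo phi : k l / (k < l)%N} /\ c = b \o phi.

Definition RB_multi_almost_periodic (R : realType) (n : nat)
  (X Y : normedModType R[i]) (I : set 'rV[R]_n)
  (Rs : set (nat -> 'rV[R]_n)) (Bs : set (set X))
  (F : 'rV[R]_n -> X -> Y) : Prop :=
  {within I `*` [set: X], continuous (fun p : 'rV[R]_n * X => F p.1 p.2)} /\
  forall B, Bs B -> forall b, Rs b ->
    exists phi : nat -> nat, {homo phi : k l / (k < l)%N} /\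
    exists Fs : 'rV[R]_n -> X -> Y,
      forall eps : R[i], 0 < eps -> exists N : nat, forall l : nat, (N <= l)%N ->
        forall t x, I t -> B x -> `|F (t + b (phi l)) x - Fs t x| < eps.

Definition R_multi_almost_periodic (R : realType) (n : nat)
  (I : set 'rV[R]_n) (Rs : set (nat -> 'rV[R]_n)) (f : 'rV[R]_n -> R[i]^o) : Prop :=
  {within I, continuous f} /\
  forall b, Rs b ->
    exists phi : nat -> nat, {homo phi : k l / (k < l)%N} /\
    exists fs : 'rV[R]_n -> R[i]^o,
      forall eps : R[i], 0 < eps -> exists N : nat, forall l : nat, (N <= l)%N ->
        forall t, I t -> `|f (t + b (phi l)) - fs t| < eps.

(* Main.v *)
Require Import Defs.
From mathcomp Require Import all_boot all_order all_algebra.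
From mathcomp Require Import all_classical all_reals all_analysis.
From mathcomp Require Import complex.
Import numFieldNormedType.Exports.
Import Order.TTheory GRing.Theory Num.Theory.
Local Open Scope ring_scope.
Local Open Scope classical_set_scope.

Lemma unif_prod (K: numFieldType) (V: normedModType K) (T: Type) (P : T -> Prop)
  (a : nat -> T -> K) (as_ : T -> K) (g : nat -> T -> V) (gs : T -> V) (Ma Mg : K) :
 (exists t, P t) ->
 (forall l t, P t -> `|a l t| <= Ma) ->
 (forall l t, P t -> `|g l t| <= Mg) ->
 (forall eps, 0 < eps -> exists N, forall l, (N <= l)%N -> forall t, P t -> `|a l t - as_ t| < eps) ->
 (forall eps, 0 < eps -> exists N, forall l, (N <= l)%N -> forall t, P t -> `|g l t - gs t| < eps) ->
 forall eps, 0 < eps -> exists N, forall l, (N <= l)%N -> forall t, P t ->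
   `|a l t *: g l t - as_ t *: gs t| < eps.
Proof.
move=> [t0 Pt0] hMa hMg ha hg eps eps0.
have Ma0 : 0 <= Ma by apply: le_trans (hMa 0%N t0 Pt0).
have Mg0 : 0 <= Mg by apply: le_trans (hMg 0%N t0 Pt0).
have [N1 hN1] := ha 1 ltr01.
have has : forall t, P t -> `|as_ t| <= Ma + 1.
  move=> t Pt; have := hN1 N1 (leqnn _) t Pt.
  rewrite -normrN opprB => h.
  have -> : as_ t = (as_ t - a N1 t) + a N1 t by rewrite subrK.
  rewrite addrC; apply: le_trans (ler_normD _ _) _.
  by rewrite lerD // ?hMa // ltW.
have Mg1 : 0 < Mg + 1 by apply: ltr_wpDl Mg0 ltr01.
have Ma2 : 0 < Ma + 1 + 1 by apply: ltr_wpDl (addr_ge0 Ma0 ler01) ltr01.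
have e2 : 0 < eps / 2 by rewrite divr_gt0.
set e1 := eps / 2 / (Mg + 1).
set e3 := eps / 2 / (Ma + 1 + 1).
have e10 : 0 < e1 by rewrite divr_gt0.
have e30 : 0 < e3 by rewrite divr_gt0.
have [Na hNa] := ha e1 e10.
have [Ng hNg] := hg e3 e30.
exists (maxn Na Ng) => l hl t Pt.
have hla : (Na <= l)%N by apply: leq_trans hl; apply: leq_maxl.
have hlg : (Ng <= l)%N by apply: leq_trans hl; apply: leq_maxr.
have -> : a l t *: g l t - as_ t *: gs t =
  (a l t - as_ t) *: g l t + as_ t *: (g l t - gs t).
  by rewrite scalerBl scalerBr addrA subrK.
apply: le_lt_trans (ler_normD _ _) _.
rewrite !normrZ.
have -> : eps = eps / 2 + eps / 2 by rewrite -splitr.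
apply: ler_ltD.
  apply: le_trans (_ : e1 * Mg <= _).
    apply: ler_pM => //; first exact: ltW (hNa l hla t Pt).
    exact: hMg.
  rewrite /e1 -[X in _ <= X](@mulfVK _ (Mg + 1)) ?gt_eqF //.
  rewrite ler_pM2l; first by rewrite lerDl.
  done.
apply: (@le_lt_trans _ _ ((Ma + 1) * `|g l t - gs t|)).
  by apply: ler_wpM2r => //; apply: has.
apply: (@lt_le_trans _ _ ((Ma + 1) * e3)).
  by rewrite ltr_pM2l ?hNg //; apply: ltr_wpDl Ma0 ltr01.
rewrite /e3 mulrC -[X in _ <= X](@mulfVK _ (Ma + 1 + 1)) ?gt_eqF //.
by rewrite ler_pM2l // lerDl.
Qed.

Lemma homo_ge_id (phi : nat -> nat) : {homo phi : k l / (k < l)%N} ->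
  forall l, (l <= phi l)%N.
Proof.
move=> h; elim=> [|l IH] //.
by apply: leq_ltn_trans IH (h _ _ (ltnSn l)).
Qed.

Theorem proposition2p20 (R : realType) (n : nat)
  (X Y : completeNormedModType R[i])
  (I : set 'rV[R]_n) (Bs : set (set X)) (Rs : set (nat -> 'rV[R]_n))
  (f : 'rV[R]_n -> R[i]^o) (F : 'rV[R]_n -> X -> Y) :
  I !=set0 ->
  Bs !=set0 ->
  (forall B, Bs B -> B !=set0) ->
  (forall x : X, exists B, Bs B /\ B x) ->
  Rs !=set0 ->
  (forall t b (l : nat), I t -> Rs b -> I (t + b l)) ->
  (forall b c, Rs b -> is_subseq b c -> Rs c) ->
  (exists M : R[i], forall t, I t -> `|f t| <= M) ->
  R_multi_almost_periodic I Rs f ->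
  RB_multi_almost_periodic I Rs Bs F ->
  (forall B, Bs B -> exists M : R[i], forall t x, I t -> B x -> `|F t x| <= M) ->
  RB_multi_almost_periodic I Rs Bs (fun t x => f t *: F t x).
Proof.
move=> [t0 It0] _ hBne _ _ hI hsub [Mf hMf] [fc fap] [Fc Fap] hMF.
split.
  apply/subspace_continuousP => -[t x] [/= It _].
  move/subspace_continuousP : Fc => /(_ (t, x) (conj It Logic.I)) /= hF.
  move/subspace_continuousP : fc => /(_ t It) /= hf.
  apply: (cvgZ _ hF).
  move=> W /hf /=; rewrite !nbhs_simpl /= => hW.
  have : \forall q \near nbhs (t, x), (I q.1 -> W (f q.1)).
    exact: (@cvg_fst _ _ (nbhs t) (nbhs x) _ _ hW).
  by apply: filterS => q hq [/hq].
move=> B hB b hb.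
have [phi1 [hphi1 [fs hfs]]] := fap b hb.
have hb1 : Rs (b \o phi1) by apply: hsub hb _; exists phi1.
have [phi2 [hphi2 [Fs hFs]]] := Fap B hB _ hb1.
exists (phi1 \o phi2); split.
  by move=> k l hkl; apply: hphi1; apply: hphi2.
exists (fun t x => fs t *: Fs t x).
have [MF hMF'] := hMF B hB.
have [x0 Bx0] := hBne B hB.
move=> eps eps0.
have H := @unif_prod _ Y ('rV[R]_n * X) (fun p => I p.1 /\ B p.2)
  (fun l p => f (p.1 + b (phi1 (phi2 l)))) (fun p => fs p.1)
  (fun l p => F (p.1 + b (phi1 (phi2 l))) p.2) (fun p => Fs p.1 p.2) Mf MF _ _ _ _ _ eps eps0.
case: H.
- by exists (t0, x0).
- by move=> l [t x] [/= It _]; apply: hMf; apply: hI.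
- by move=> l [t x] [/= It Bx]; apply: hMF' => //; apply: hI.
- move=> e e0; have [N hN] := hfs e e0; exists N => l hl [t x] [/= It _].
  apply: hN => //; apply: leq_trans hl _.
  exact: homo_ge_id.
- move=> e e0; have [N hN] := hFs e e0; exists N => l hl [t x] [/= It Bx].
  exact: hN.
move=> N hN; exists N => l hl t x It Bx; exact: (hN l hl (t, x) (conj It Bx)).
Qed.
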